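(* Let $n\ge0$, $h\ge1$, and $t$ an even natural number. Suppose the variety $\mathcal V$ has $n+2$ Gumm terms and satisfies $\alpha(\beta\circ_{2h+1}\alpha\gamma)\subseteq\alpha\beta\circ_t\alpha\gamma$. Then $\mathcal V$ satisfies $$\alpha(\beta\circ_{4h+3}\alpha\gamma)\subseteq\alpha\beta\circ_{t+(4h+2)n}\alpha\gamma,$$ and, more generally, for every $p\ge1$, $\mathcal V$ satisfies $\alpha(\beta\circ_z\alpha\gamma)\subseteq\alpha\beta\circ_{t'}\alpha\gamma$, where $z=2^p(h+1)-1$ and $t'=t+(2^{p+1}-4)hn+(2^{p+1}-2p-2)n$.
   Context: Here $\alpha,\beta,\gamma$ range over congruences of algebras in $\mathcal V$. $\circ$ is relational composition, juxtaposition is intersection. For relations $X,Y$ and $m\ge1$, $X\circ_m Y$ denotes $X\circ Y\circ X\circ\cdots$ with $m$ factors. A variety has $n+2$ Gumm terms if it has ternary terms $p,j_1,\dots,j_{n+1}$ satisfying: $x=j_i(x,y,x)$ for all $i$; $x=p(x,z,z)$; $p(x,x,z)=j_1(x,x,z)$; $j_i(x,z,z)=j_{i+1}(x,z,z)$ for odd $i\le n$; $j_i(x,x,z)=j_{i+1}(x,x,z)$ for even $i\le n$; $j_{n+1}(x,y,z)=z$. *)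

(* Defs.v *)
From Stdlib Require Import Arith Vectors.Fin.

Set Implicit Arguments.

Record signature := Signature {
  op : Type;
  arity : op -> nat
}.

Inductive term (S : signature) (X : Type) : Type :=
| Var : X -> term S X
| App : forall f : op S, (Fin.t (arity S f) -> term S X) -> term S X.
Arguments Var {S X}.
Arguments App {S X}.

Record algebra (S : signature) := Algebra {
  carrier :> Type;
  interp : forall f : op S, (Fin.t (arity S f) -> carrier) -> carrier
}.

Fixpoint eval (S : signature) (A : algebra S) (X : Type) (env : X -> A)
  (t : term S X) : A :=
  match t with
  | Var x => env x
  | App f ts => interp A f (fun k => eval A env (ts k))
  end.

(* A variety, given as the class of models of a set of identities
   (Birkhoff: equational classes = varieties). Identities use variables nat. *)
Record variety := Variety {
  vsig : signature;
  vaxioms : term vsig nat * term vsig nat -> Prop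
}.

Definition satisfies_identity (S : signature) (A : algebra S)
  (e : term S nat * term S nat) : Prop :=
  forall env : nat -> A, eval A env (fst e) = eval A env (snd e).

Definition in_variety (V : variety) (A : algebra (vsig V)) : Prop :=
  forall e, vaxioms V e -> satisfies_identity A e.

Inductive var3 := vx | vy | vz.

Definition tern (S : signature) (A : algebra S) (t : term S var3) (a b c : A) : A :=
  eval A (fun v => match v with vx => a | vy => b | vz => c end) t.

(* V has n+2 Gumm terms p, j_1, ..., j_{n+1} (j i is j_i, only 1<=i<=n+1 used). *)
Definition has_Gumm_terms (V : variety) (n : nat) : Prop :=
  exists (p : term (vsig V) var3) (j : nat -> term (vsig V) var3),
    forall A : algebra (vsig V), in_variety V A ->
    forall x y z : A,
      (forall i, 1 <= i <= n + 1 -> tern A (j i) x y x = x) /\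
      tern A p x z z = x /\
      tern A p x x z = tern A (j 1) x x z /\
      (forall i, 1 <= i <= n -> Nat.odd i = true ->
         tern A (j i) x z z = tern A (j (i + 1)) x z z) /\
      (forall i, 1 <= i <= n -> Nat.even i = true ->
         tern A (j i) x x z = tern A (j (i + 1)) x x z) /\
      tern A (j (n + 1)) x y z = z.

Definition congruence (S : signature) (A : algebra S) (R : A -> A -> Prop) : Prop :=
  (forall a, R a a) /\
  (forall a b, R a b -> R b a) /\
  (forall a b c, R a b -> R b c -> R a c) /\
  (forall (f : op S) (u v : Fin.t (arity S f) -> A),
      (forall k, R (u k) (v k)) -> R (interp A f u) (interp A f v)).

Definition rcomp (T : Type) (X Y : T -> T -> Prop) : T -> T -> Prop :=
  fun a c => exists b, X a b /\ Y b c.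

Definition rinter (T : Type) (X Y : T -> T -> Prop) : T -> T -> Prop :=
  fun a b => X a b /\ Y a b.

(* X o_m Y = X o Y o X o ... with m factors; by convention X o_0 Y is the
   identity relation (only relevant for the degenerate case t = 0). *)
Fixpoint circ_m (T : Type) (m : nat) (X Y : T -> T -> Prop) : T -> T -> Prop :=
  match m with
  | 0 => fun a b => a = b
  | 1 => X
  | S k => rcomp X (circ_m k Y X)
  end.

Definition satisfies_incl (V : variety) (m k : nat) : Prop :=
  forall (A : algebra (vsig V)), in_variety V A ->
  forall alpha beta gamma : A -> A -> Prop,
    congruence A alpha -> congruence A beta -> congruence A gamma ->
    forall a b : A,
      rinter alpha (circ_m m beta (rinter alpha gamma)) a b ->
      circ_m k (rinter alpha beta) (rinter alpha gamma) a b.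

(* Main.v *)
Require Import Defs.
From Stdlib Require Import Arith Lia Bool.

Definition chain {T : Type} (P Q : T -> T -> Prop) (k : nat) (u v : T) : Prop :=
  exists f : nat -> T, f 0 = u /\ f k = v /\
    forall i, i < k -> (if Nat.even i then P else Q) (f i) (f (S i)).

Lemma even_S i : Nat.even (S i) = negb (Nat.even i).
Proof. rewrite Nat.even_succ, <- Nat.negb_even. reflexivity. Qed.

Lemma circ_chain {T : Type} k : forall (X Y : T -> T -> Prop) u v,
  circ_m k X Y u v <-> chain X Y k u v.
Proof.
  induction k as [|k IH]; intros X Y u v.
  - simpl. split.
    + intros ->. exists (fun _ => v). repeat split; intros; lia.
    + intros [f [H0 [H1 _]]]. congruence.
  - destruct k as [|k].
    + simpl. split.
      * intros H. exists (fun i => match i with 0 => u | _ => v end).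
        repeat split. intros i Hi. assert (i = 0) by lia. subst. exact H.
      * intros [f [H0 [H1 H]]]. specialize (H 0 ltac:(lia)). simpl in H. congruence.
    + change (circ_m (S (S k)) X Y u v) with (rcomp X (circ_m (S k) Y X) u v).
      split.
      * intros [c [Hc Hr]]. apply IH in Hr. destruct Hr as [g [G0 [G1 G]]].
        exists (fun i => match i with 0 => u | S i' => g i' end).
        split; [reflexivity|]. split; [exact G1|].
        intros [|i] Hi.
        -- simpl. rewrite G0. exact Hc.
        -- change ((if Nat.even (S i) then X else Y) (g i) (g (S i))). rewrite even_S. specialize (G i ltac:(lia)).
           destruct (Nat.even i); exact G.
      * intros [f [F0 [F1 F]]]. exists (f 1). split.
        -- specialize (F 0 ltac:(lia)). simpl in F. rewrite F0 in F. exact F.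
        -- apply IH. exists (fun i => f (S i)). split; [reflexivity|]. split; [exact F1|].
           intros i Hi. specialize (F (S i) ltac:(lia)). rewrite even_S in F.
           destruct (Nat.even i); exact F.
Qed.

Lemma chain_map {T U : Type} (P Q : T -> T -> Prop) (P' Q' : U -> U -> Prop)
  (g : T -> U) k u v :
  (forall x y, P x y -> P' (g x) (g y)) -> (forall x y, Q x y -> Q' (g x) (g y)) ->
  chain P Q k u v -> chain P' Q' k (g u) (g v).
Proof.
  intros HP HQ [f [F0 [F1 F]]]. exists (fun i => g (f i)).
  split; [congruence|]. split; [congruence|].
  intros i Hi. specialize (F i Hi). destruct (Nat.even i); auto.
Qed.

Lemma chain_const {T : Type} (P Q : T -> T -> Prop) k u :
  (forall x, P x x) -> (forall x, Q x x) -> chain P Q k u u.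
Proof.
  intros HP HQ. exists (fun _ => u). repeat split. intros i _. destruct (Nat.even i); auto.
Qed.

Lemma chain_split {T : Type} (P Q : T -> T -> Prop) k u v :
  chain P Q (S k) u v -> exists w, P u w /\ chain Q P k w v.
Proof.
  intros [f [F0 [F1 F]]]. exists (f 1). split.
  - specialize (F 0 ltac:(lia)). simpl in F. rewrite F0 in F. exact F.
  - exists (fun i => f (S i)). split; [reflexivity|]. split; [exact F1|].
    intros i Hi. specialize (F (S i) ltac:(lia)). rewrite even_S in F.
    destruct (Nat.even i); exact F.
Qed.

Lemma chain_concat {T : Type} (P Q : T -> T -> Prop) m k u w v :
  chain P Q (2 * m) u w -> chain P Q k w v -> chain P Q (2 * m + k) u v.
Proof.
  intros [f [F0 [F1 F]]] [g [G0 [G1 G]]].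
  exists (fun i => if i <=? 2 * m then f i else g (i - 2 * m)).
  split.
  - simpl. exact F0.
  - split.
    + destruct (Nat.leb_spec (2*m+k) (2*m)).
      * assert (k = 0) by lia. subst. replace (2*m+0) with (2*m) by lia. congruence.
      * replace (2*m+k-2*m) with k by lia. exact G1.
    + intros i Hi.
      destruct (Nat.leb_spec i (2*m)); destruct (Nat.leb_spec (S i) (2*m)).
      * apply F. lia.
      * assert (i = 2*m) by lia. subst i. rewrite F1, <- G0.
        replace (S (2*m) - 2*m) with 1 by lia.
        specialize (G 0 ltac:(lia)). simpl in G.
        rewrite Nat.even_mul. simpl. exact G.
      * lia.
      * replace (S i - 2*m) with (S (i - 2*m)) by lia.
        specialize (G (i - 2*m) ltac:(lia)).
        replace (Nat.even i) with (Nat.even (i - 2*m)); [exact G|].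
        replace i with ((i - 2*m) + 2*m) at 2 by lia.
        rewrite Nat.even_add, Nat.even_mul. change (Nat.even 2) with true. simpl orb. destruct (Nat.even (i - 2*m)); reflexivity.
Qed.

Lemma chain_merge {T : Type} (P Q : T -> T -> Prop) m u w w' :
  (forall x y z, Q x y -> Q y z -> Q x z) ->
  chain P Q (2 * m + 2) u w -> Q w w' -> chain P Q (2 * m + 2) u w'.
Proof.
  intros Htr [f [F0 [F1 F]]] Hq.
  exists (fun i => if i =? 2*m+2 then w' else f i).
  split; [destruct (Nat.eqb_spec 0 (2*m+2)); [lia|exact F0]|]. split; [rewrite Nat.eqb_refl; reflexivity|].
  intros i Hi. destruct (Nat.eqb_spec i (2*m+2)); [lia|].
  destruct (Nat.eqb_spec (S i) (2*m+2)).
  - assert (i = 2*m+1) by lia. subst i. specialize (F (2*m+1) ltac:(lia)).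
    replace (Nat.even (2*m+1)) with false in *.
    2:{ rewrite Nat.even_add, Nat.even_mul. reflexivity. }
    rewrite e, F1 in F. eauto.
  - apply F. exact Hi.
Qed.

Lemma even_sub_par a b : b <= a -> Nat.even (a - b) = Bool.eqb (Nat.even a) (Nat.even b).
Proof.
  intros H. replace a with ((a - b) + b) at 2 by lia. rewrite Nat.even_add.
  destruct (Nat.even (a-b)), (Nat.even b); reflexivity.
Qed.

Lemma chain_rev {T : Type} (P Q : T -> T -> Prop) k u v :
  (forall x y, P x y -> P y x) -> (forall x y, Q x y -> Q y x) ->
  chain P Q k u v ->
  chain (if Nat.even k then Q else P) (if Nat.even k then P else Q) k v u.
Proof.
  intros HP HQ [f [F0 [F1 F]]]. exists (fun i => f (k - i)).
  split; [rewrite Nat.sub_0_r; exact F1|]. split; [rewrite Nat.sub_diag; exact F0|].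
  intros i Hi. specialize (F (k - S i) ltac:(lia)).
  replace (S (k - S i)) with (k - i) in F by lia.
  rewrite even_sub_par in F by lia. rewrite even_S in F.
  destruct (Nat.even k), (Nat.even i); simpl in *; auto.
Qed.

Lemma eval_compat (S : signature) (A : algebra S) (R : A -> A -> Prop) (X : Type)
  (e1 e2 : X -> A) : congruence A R -> (forall x, R (e1 x) (e2 x)) ->
  forall t, R (eval A e1 t) (eval A e2 t).
Proof.
  intros [Hr [Hs [Ht Hc]]] He t. induction t as [x|f ts IH]; simpl.
  - apply He.
  - apply Hc. exact IH.
Qed.

Lemma tern_compat (S : signature) (A : algebra S) (R : A -> A -> Prop) t a b c a' b' c' :
  congruence A R -> R a a' -> R b b' -> R c c' -> R (tern A t a b c) (tern A t a' b' c').
Proof.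
  intros HR H1 H2 H3. unfold tern. apply eval_compat; [exact HR|]. intros []; assumption.
Qed.

Lemma cong_inter (S : signature) (A : algebra S) R R' :
  congruence A R -> congruence A R' -> congruence A (rinter R R').
Proof.
  intros [r1 [s1 [t1 c1]]] [r2 [s2 [t2 c2]]]. unfold rinter.
  split; [|split; [|split]].
  - auto.
  - intros a b []; auto.
  - intros a b c [] []; eauto.
  - intros f u v H. split; [apply c1|apply c2]; intros k; apply H.
Qed.

Section Core.
Variable (Sg : signature) (A : algebra Sg) (p : term Sg var3) (j : nat -> term Sg var3).
Variable (n z m : nat).
Hypothesis Hj1 : forall i x y, 1 <= i <= n+1 -> tern A (j i) x y x = x.
Hypothesis Hp1 : forall x y, tern A p x y y = x.
Hypothesis Hp2 : forall x y, tern A p x x y = tern A (j 1) x x y.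
Hypothesis Hodd : forall i x y, 1 <= i <= n -> Nat.odd i = true ->
  tern A (j i) x y y = tern A (j (i+1)) x y y.
Hypothesis Heven : forall i x y, 1 <= i <= n -> Nat.even i = true ->
  tern A (j i) x x y = tern A (j (i+1)) x x y.
Hypothesis Hlast : forall x y w, tern A (j (n+1)) x y w = w.
Hypothesis Hzodd : Nat.odd z = true.
Variable (alpha beta gamma : A -> A -> Prop).
Hypothesis (Ha : congruence A alpha) (Hb : congruence A beta) (Hc : congruence A gamma).
Hypothesis Hinc : forall u v, alpha u v -> chain beta (rinter alpha gamma) z u v ->
  chain (rinter alpha beta) (rinter alpha gamma) (2*m+2) u v.

Let X := rinter alpha beta.
Let Y := rinter alpha gamma.

Lemma HX : congruence A X. Proof. apply cong_inter; assumption. Qed.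
Lemma HY : congruence A Y. Proof. apply cong_inter; assumption. Qed.

Lemma core a b : alpha a b -> chain beta Y (2*z+1) a b ->
  chain Y X (2*m+2 + 2*z*n) a b.
Proof.
  intros Hab Hch.
  pose proof HX as HXc. pose proof HY as HYc.
  pose proof Ha as Ha'. pose proof Hb as Hb'.
  destruct Ha' as [ar [asy [atr _]]].
  destruct Hb' as [br [bsy [btr _]]].
  destruct HXc as [xr [xsy [xtr _]]].
  destruct HYc as [yr [ysy [ytr _]]].
  assert (Hrev : chain beta Y (2*z+1) b a).
  { pose proof (chain_rev _ _ _ _ _ bsy ysy Hch) as H.
    replace (Nat.even (2*z+1)) with false in H; [exact H|].
    rewrite Nat.even_add, Nat.even_mul. reflexivity. }
  destruct Hch as [f [F0 [F1 F]]].
  set (q := tern A p a a b).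
  set (w := tern A p a (f z) (f (z+1))).
  assert (Hqw : chain beta Y z q w).
  { exists (fun k => tern A p a (f k) (f (2*z+1-k))).
    split; [rewrite Nat.sub_0_r, F0, F1; reflexivity|].
    split; [replace (2*z+1-z) with (z+1) by lia; reflexivity|].
    intros i Hi.
    assert (E : Nat.even (2*z - i) = Nat.even i).
    { rewrite even_sub_par by lia. rewrite Nat.even_mul. simpl.
      destruct (Nat.even i); reflexivity. }
    pose proof (F i ltac:(lia)) as H1.
    pose proof (F (2*z - i) ltac:(lia)) as H2.
    rewrite E in H2. replace (S (2*z-i)) with (2*z+1-i) in H2 by lia.
    replace (2*z+1 - S i) with (2*z-i) by lia.
    destruct (Nat.even i).
    - apply tern_compat; auto.
    - apply tern_compat; auto. apply cong_inter; assumption. }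
  assert (HwY : Y w a).
  { unfold w. apply ytr with (tern A p a (f (z+1)) (f (z+1))); [|rewrite Hp1; apply yr].
    apply tern_compat; auto.
    - apply cong_inter; assumption.
    - pose proof (F z ltac:(lia)) as H.
      replace (Nat.even z) with false in H; [rewrite Nat.add_1_r; exact H|].
      rewrite <- Nat.negb_odd, Hzodd. reflexivity. }
  assert (Hqa : alpha q a).
  { unfold q. rewrite Hp2. apply atr with (tern A (j 1) a a a); [|rewrite Hj1 by lia; apply ar].
    apply tern_compat; auto. }
  assert (Hseg1 : chain Y X (2*m+2) a q).
  { assert (H : chain X Y (2*m+2) q a).
    { apply chain_merge with w; [exact ytr| |exact HwY].
      apply Hinc; [|exact Hqw]. apply atr with a; [exact Hqa|]. apply asy. apply HwY. }
    pose proof (chain_rev _ _ _ _ _ xsy ysy H) as H'.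
    replace (Nat.even (2*m+2)) with true in H'; [exact H'|].
    rewrite Nat.even_add, Nat.even_mul. reflexivity. }
  assert (Hind : forall i, i <= n -> chain Y X (2*m+2 + 2*z*i) a
           (tern A (j (S i)) a (if Nat.odd (S i) then a else b) b)).
  { induction i as [|i IH]; intros Hi.
    - replace (2*m+2+2*z*0) with (2*m+2) by lia. simpl. rewrite <- Hp2. exact Hseg1.
    - specialize (IH ltac:(lia)).
      set (g := fun x => tern A (j (S i)) a x b).
      assert (Hga : forall x, alpha (g x) a).
      { intros x. unfold g. apply atr with (tern A (j (S i)) a x a); [|rewrite Hj1 by lia; apply ar].
        apply tern_compat; auto. }
      assert (Hmap : forall u v, chain beta Y (2*z+1) u v -> chain X Y (2*z+1) (g u) (g v)).
      { intros u v H. apply chain_map with (P := beta) (Q := Y); [| |exact H].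
        - intros x y Hxy. split; [eauto|]. unfold g. apply tern_compat; auto.
        - intros x y Hxy. unfold g. apply tern_compat; auto. apply cong_inter; assumption. }
      assert (Hseg : chain X Y (2*z+1)
         (tern A (j (S i)) a (if Nat.odd (S i) then a else b) b)
         (tern A (j (S (S i))) a (if Nat.odd (S (S i)) then a else b) b)).
      { rewrite (Nat.odd_succ (S i)), <- Nat.negb_odd.
        destruct (Nat.odd (S i)) eqn:Eo; simpl negb; cbv iota.
        - replace (S (S i)) with (S i + 1) by lia. rewrite <- Hodd by (auto; lia). apply (Hmap a b).
          exists f. auto.
        - replace (S (S i)) with (S i + 1) by lia. rewrite <- Heven by (try lia; rewrite <- Nat.negb_odd, Eo; reflexivity).
          apply (Hmap b a). exact Hrev. }
      replace (2*z+1) with (S (2*z)) in Hseg by lia.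
      destruct (chain_split _ _ _ _ _ Hseg) as [w1 [Hw1 Hrest]].
      assert (Hm : chain Y X (2*m+2+2*z*i) a w1).
      { replace (2*m+2+2*z*i) with (2*(m+z*i)+2) in * by lia.
        eapply chain_merge; [exact xtr|exact IH|exact Hw1]. }
      pose proof (chain_concat _ _ (m + z*i + 1) _ _ _ _ 
        ltac:(replace (2*(m+z*i+1)) with (2*m+2+2*z*i) by lia; exact Hm) Hrest) as Hc2.
      replace (2*(m+z*i+1) + 2*z) with (2*m+2+2*z*S i) in Hc2 by lia.
      exact Hc2. }
  specialize (Hind n (le_n n)). replace (S n) with (n+1) in Hind by lia. rewrite Hlast in Hind. exact Hind.
Qed.
End Core.

Lemma trivial_alg (V : variety) z : 1 <= z -> satisfies_incl V z 0 ->
  forall A : algebra (vsig V), in_variety V A -> forall x y : A, x = y.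
Proof.
  intros Hz Hinc A HA x y.
  set (full := fun _ _ : A => True).
  assert (Hf : congruence A full) by (repeat split).
  specialize (Hinc A HA full full full Hf Hf Hf x y). apply Hinc.
  split; [exact I|]. apply circ_chain.
  exists (fun i => match i with 0 => x | _ => y end).
  split; [reflexivity|]. split; [destruct z; [lia|reflexivity]|].
  intros i _. destruct (Nat.even i); repeat split.
Qed.

Lemma step (V : variety) n z T : Nat.odd z = true -> Nat.even T = true ->
  has_Gumm_terms V n -> satisfies_incl V z T -> satisfies_incl V (2*z+1) (T + 2*z*n).
Proof.
  intros Hz HT [p [j HG]] Hinc.
  assert (Hz1 : 1 <= z) by (destruct z; [discriminate|lia]).
  intros A HA alpha beta gamma Ha Hb Hc a b [Hab Hch].
  destruct T as [|T'].
  - assert (E := trivial_alg V z Hz1 Hinc A HA a b). subst b.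
    apply circ_chain. apply chain_const; intros x; split; first [apply (proj1 Ha) | apply (proj1 Hb) | apply (proj1 Hc)].
  - assert (HTm : exists m, S T' = 2*m+2).
    { apply Nat.even_spec in HT. destruct HT as [k Hk]. exists (k-1). lia. }
    destruct HTm as [m Hm]. rewrite Hm in *.
    apply circ_chain in Hch.
    assert (Hrev : chain beta (rinter alpha gamma) (2*z+1) b a).
    { pose proof (chain_rev _ _ _ _ _ (proj1 (proj2 Hb)) (proj1 (proj2 (cong_inter _ _ _ _ Ha Hc))) Hch) as H.
      replace (Nat.even (2*z+1)) with false in H; [exact H|].
      rewrite Nat.even_add, Nat.even_mul. reflexivity. }
    assert (Hcore : chain (rinter alpha gamma) (rinter alpha beta) (2*m+2+2*z*n) b a).
    { apply (core _ A p j n z m) with (alpha := alpha) (beta := beta) (gamma := gamma).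
      - intros i x y Hi. apply (HG A HA x y x). exact Hi.
      - intros x y. apply (HG A HA x x y).
      - intros x y. apply (HG A HA x x y).
      - intros i x y Hi Ho. apply (HG A HA x y y); assumption.
      - intros i x y Hi Ho. apply (HG A HA x x y); assumption.
      - intros x y w. apply (HG A HA x y w).
      - exact Hz.
      - exact Ha.
      - exact Hb.
      - exact Hc.
      - intros u v Huv Hch2. apply circ_chain. apply (Hinc A HA alpha beta gamma Ha Hb Hc u v).
        split; [exact Huv|]. apply circ_chain. exact Hch2.
      - apply (proj1 (proj2 Ha)). exact Hab.
      - exact Hrev. }
    apply circ_chain.
    pose proof (chain_rev _ _ _ _ _ (proj1 (proj2 (cong_inter _ _ _ _ Ha Hc)))
                  (proj1 (proj2 (cong_inter _ _ _ _ Ha Hb))) Hcore) as H.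
    replace (Nat.even (2*m+2+2*z*n)) with true in H; [exact H|].
    rewrite !Nat.even_add, !Nat.even_mul. reflexivity.
Qed.

Lemma sub_eq a b c : a = b + c -> a - c = b.
Proof. lia. Qed.

Lemma gen (V : variety) (n h t : nat) :
  1 <= h -> Nat.even t = true -> has_Gumm_terms V n ->
  satisfies_incl V (2 * h + 1) t ->
  forall p : nat, 1 <= p ->
     satisfies_incl V (2 ^ p * (h + 1) - 1)
       (t + (2 ^ (p + 1) - 4) * h * n + (2 ^ (p + 1) - 2 * p - 2) * n).
Proof.
  intros Hh Ht HG Hinc p Hp.
  destruct p as [|q]; [lia|]. clear Hp.
  induction q as [|q IH].
  - replace (2 ^ 1 * (h + 1) - 1) with (2*h+1) by (simpl; lia).
    replace (t + (2 ^ (1 + 1) - 4) * h * n + (2 ^ (1 + 1) - 2 * 1 - 2) * n) with t by (simpl; lia).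
    exact Hinc.
  - set (Q := 2 ^ q).
    assert (HQ : q < Q) by (apply Nat.pow_gt_lin_r; lia).
    assert (E1 : 2 ^ S q = 2 * Q) by reflexivity.
    assert (E2 : 2 ^ (S q + 1) = 4 * Q) by (rewrite Nat.add_1_r; simpl; unfold Q; lia).
    assert (E3 : 2 ^ S (S q) = 4 * Q) by (simpl; unfold Q; lia).
    assert (E4 : 2 ^ (S (S q) + 1) = 8 * Q) by (rewrite Nat.add_1_r; simpl; unfold Q; lia).
    rewrite E1, E2 in IH. rewrite E3, E4.
    destruct Q as [|Q0]; [lia|].
    assert (D : exists d, Q0 = q + d) by (exists (Q0 - q); lia).
    destruct D as [d ->].
    set (e := q + d) in *.
    rewrite (sub_eq (2 * S e * (h + 1)) (2*e*(h+1) + 2*h + 1) 1) in IH by ring.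
    rewrite (sub_eq (4 * S e * (h + 1)) (4*e*(h+1) + 4*h + 3) 1) by ring.
    rewrite (sub_eq (4 * S e) (4*e) 4) in IH by ring.
    rewrite (sub_eq (8 * S e) (8*e+4) 4) by ring.
    rewrite (sub_eq (4 * S e - 2 * S q) (2*q + 4*d) 2) in IH
      by (apply sub_eq; unfold e; ring).
    rewrite (sub_eq (8 * S e - 2 * S (S q)) (6*q + 8*d+2) 2)
      by (apply sub_eq; unfold e; ring).
    apply Nat.even_spec in Ht. destruct Ht as [k Hk]. subst t.
    assert (Ho : Nat.odd (2 * e * (h + 1) + 2 * h + 1) = true).
    { apply Nat.odd_spec. exists (e*(h+1)+h). ring. }
    assert (He : Nat.even (2 * k + 4 * e * h * n + (2 * q + 4 * d) * n) = true).
    { apply Nat.even_spec. exists (k + 2*e*h*n + (q+2*d)*n). ring. }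
    pose proof (step V n _ _ Ho He HG IH) as St.
    replace (2 * (2 * e * (h + 1) + 2 * h + 1) + 1) with (4 * e * (h + 1) + 4 * h + 3) in St by ring.
    replace (2 * k + (8 * e + 4) * h * n + (6 * q + 8 * d + 2) * n) with
      (2 * k + 4 * e * h * n + (2 * q + 4 * d) * n +
        2 * (2 * e * (h + 1) + 2 * h + 1) * n) by (unfold e; ring).
    apply St.
Qed.

Theorem corollary4p9 (V : variety) (n h t : nat) :
  1 <= h ->
  Nat.even t = true ->
  has_Gumm_terms V n ->
  satisfies_incl V (2 * h + 1) t ->
  satisfies_incl V (4 * h + 3) (t + (4 * h + 2) * n) /\
  (forall p : nat, 1 <= p ->
     satisfies_incl V (2 ^ p * (h + 1) - 1)
       (t + (2 ^ (p + 1) - 4) * h * n + (2 ^ (p + 1) - 2 * p - 2) * n)).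
Proof.
  intros Hh Ht HG Hinc. split.
  - pose proof (gen V n h t Hh Ht HG Hinc 2 ltac:(lia)) as H.
    replace (2 ^ 2 * (h + 1) - 1) with (4 * h + 3) in H by (simpl; lia).
    replace (t + (2 ^ (2 + 1) - 4) * h * n + (2 ^ (2 + 1) - 2 * 2 - 2) * n)
      with (t + (4 * h + 2) * n) in H by (simpl; ring).
    exact H.
  - exact (gen V n h t Hh Ht HG Hinc).
Qed.
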